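(* Let $\mathcal A$ be a group and $\mathcal H$ a subgroup of $\mathcal A$. If for every generating system $X$ of $\mathcal A$ of size at most $\mathrm{rank}(\mathcal A)+1$ the Schreier graph $\mathrm{Sch}(\mathcal A,\mathcal H,X)$ is vertex-transitive, then $\mathcal H$ is a normal subgroup of $\mathcal A$.
   Context: $\mathrm{rank}(\mathcal A)$ is the minimal cardinality of a generating set. A generating system is a multiset of elements generating $\mathcal A$. The Schreier graph $\mathrm{Sch}(\mathcal A,\mathcal H,X)$ has vertices the right cosets $\mathcal Hg$ and, for each coset and each $x$ with $x\in X$ or $x^{-1}\in X$, an edge labeled $x$ from $\mathcal Hg$ to $\mathcal Hgx$ whose inverse is the edge labeled $x^{-1}$ from $\mathcal Hgx$ (loops and multiple edges allowed). Vertex-transitivity is with respect to all graph automorphisms (not necessarily label-preserving). *)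

(* Defs.v *)
From Stdlib Require Import FunctionalExtensionality.
From mathcomp Require Import all_boot.
Set Implicit Arguments.
Unset Strict Implicit.
Unset Printing Implicit Defensive.
Local Open Scope group_scope.

Section GroupDefs.
Variable G : groupType.

Definition is_subgroup (H : G -> Prop) : Prop :=
  [/\ H 1, (forall x y, H x -> H y -> H (x * y)) & (forall x, H x -> H x^-1)].

Definition is_normal (H : G -> Prop) : Prop :=
  is_subgroup H /\ forall g h, H h -> H (g^-1 * h * g).

Definition gen_by (X : seq G) (g : G) : Prop :=
  forall K : G -> Prop, is_subgroup K -> (forall x, x \in X -> K x) -> K g.

Definition generating_system (X : seq G) : Prop := forall g, gen_by X g.

Definition is_rank (r : nat) : Prop :=
  (exists X : seq G, generating_system X /\ size X = r) /\
  (forall X : seq G, generating_system X -> r <= size X).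

Definition rcoset (H : G -> Prop) (g : G) : G -> Prop := fun y => H (y * g^-1).

Definition coset (H : G -> Prop) := {C : G -> Prop | exists g, C = rcoset H g}.

Lemma rcoset_mul_ex (H : G -> Prop) (C : coset H) (x : G) :
  exists g, (fun y => sval C (y * x^-1)) = rcoset H g.
Proof.
case: C => C /= [g ->]; exists (g * x); rewrite /rcoset.
congr (fun y => H _); apply: functional_extensionality => y.
by rewrite invgM mulgA.
Qed.

Definition coset_mul (H : G -> Prop) (C : coset H) (x : G) : coset H :=
  exist _ (fun y => sval C (y * x^-1)) (rcoset_mul_ex C x).

Definition sch_label (X : seq G) := {x : G | (x \in X) || (x^-1 \in X)}.

Lemma sch_label_inv_ok (X : seq G) (s : sch_label X) :
  ((sval s)^-1 \in X) || ((sval s)^-1^-1 \in X).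
Proof. by case: s => x /=; rewrite invgK orbC. Qed.

Definition sch_label_inv (X : seq G) (s : sch_label X) : sch_label X :=
  exist _ (sval s)^-1 (sch_label_inv_ok s).
End GroupDefs.
Local Close Scope group_scope.

(* A graph in the sense of Serre: vertices, (oriented) edges, origin and
   terminus maps, and the edge-reversal map (loops and multiple edges allowed). *)
Record graph := Graph {
  gV : Type;
  gE : Type;
  gsrc : gE -> gV;
  gtgt : gE -> gV;
  grev : gE -> gE }.

(* A graph automorphism (not necessarily label-preserving): a bijection of
   the vertices together with a bijection of the edges compatible with the
   origin, terminus and reversal maps. *)
Definition graph_aut (Gr : graph) (fV : gV Gr -> gV Gr) : Prop :=
  bijective fV /\
  exists fE : gE Gr -> gE Gr,
    [/\ bijective fE,
        forall e, gsrc (fE e) = fV (gsrc e),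
        forall e, gtgt (fE e) = fV (gtgt e) &
        forall e, fE (grev e) = grev (fE e)].

Definition vertex_transitive (Gr : graph) : Prop :=
  forall u v : gV Gr, exists fV, graph_aut fV /\ fV u = v.

(* The Schreier graph Sch(G, H, X): vertices the right cosets H g; for each
   coset C and each label x (x \in X or x^-1 \in X) an edge (C, x) from C to
   C x, whose reverse is the edge (C x, x^-1). *)
Definition schreier_graph (G : groupType) (H : G -> Prop) (X : seq G) : graph :=
  @Graph (coset H) (coset H * sch_label X)%type
    (fun e => e.1)
    (fun e => coset_mul e.1 (sval e.2))
    (fun e => (coset_mul e.1 (sval e.2), sch_label_inv e.2)).

(* Main.v *)
Require Import Defs.
From mathcomp Require Import all_boot.
From Stdlib Require Import Classical FunctionalExtensionality PropExtensionality ProofIrrelevance.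
Local Open Scope group_scope.

Section Aux.
Variable A : groupType.

Lemma modify_list (P : A -> Prop) (h : A) (hP : ~ P h)
  (Pinv : forall x, P x -> P x^-1) (Pmul : forall x y, P x -> P y -> P (x * y)) :
  forall Y : seq A, exists Z : seq A, size Z = size Y /\
    (forall z, z \in Z -> ~ P z) /\ (forall y, y \in Y -> y \in Z \/ y * h \in Z).
Proof.
elim=> [|y Y [Z [sZ [nZ cZ]]]]; first by exists [::].
case: (classic (P y)) => Py.
- exists (y * h :: Z); split; first by rewrite /= sZ.
  split.
  + move=> z; rewrite inE => /orP [/eqP -> | /nZ //].
    move=> Pyh; apply: hP; have := Pmul _ _ (Pinv _ Py) Pyh.
    by rewrite mulgA mulVg mul1g.
  + move=> y'; rewrite inE => /orP [/eqP -> | /cZ]; first by right; rewrite inE eqxx.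
    by case=> H; [left|right]; rewrite inE H orbT.
- exists (y :: Z); split; first by rewrite /= sZ.
  split.
  + by move=> z; rewrite inE => /orP [/eqP -> | /nZ].
  + move=> y'; rewrite inE => /orP [/eqP -> | /cZ]; first by left; rewrite inE eqxx.
    by case=> H; [left|right]; rewrite inE H orbT.
Qed.
End Aux.

Theorem proposition6p3 (A : groupType) (H : A -> Prop) (r : nat) :
  is_subgroup H ->
  is_rank A r ->
  (forall X : seq A, generating_system X -> size X <= r.+1 ->
     vertex_transitive (schreier_graph H X)) ->
  is_normal H.
Proof.
move=> sH [[Y [genY sY]] _] VT.
have [H1 HM HV] := sH.
split=> //.
apply: NNPP => nN.
have [g0 nN0] := not_all_ex_not _ _ nN.
have [h nN'] := not_all_ex_not _ _ nN0.
have [Hh nH] := imply_to_and _ _ nN'.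
pose g := g0^-1.
pose P := fun z : A => H (g * z * g^-1).
have hP : ~ P h by rewrite /P /g invgK.
have Pinv : forall x, P x -> P x^-1.
  move=> x; rewrite /P => Px; have := HV _ Px.
  by rewrite !invgM invgK mulgA.
have Pmul : forall x y, P x -> P y -> P (x * y).
  move=> x y; rewrite /P => Px Py; have := HM _ _ Px Py.
  by rewrite !mulgA mulgVK.
have [Z [sZ [nZ cZ]]] := @modify_list A P h hP Pinv Pmul Y.
pose X := h :: Z.
have genX : generating_system X.
  move=> a K sK KX; apply: (genY a K sK) => y /cZ [yZ|yhZ].
    by apply: KX; rewrite inE yZ orbT.
  have [_ KM KV] := sK.
  have Kh : K h by apply: KX; rewrite inE eqxx.
  have Kyh : K (y * h) by apply: KX; rewrite inE yhZ orbT.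
  have := KM _ _ Kyh (KV _ Kh).
  by rewrite mulgK.
have szX : size X <= r.+1 by rewrite /= sZ sY.
have [fV [[_ [fE [_ fsrc ftgt _]]] fuv]] :=
  VT X genX szX (exist _ (rcoset H 1) (ex_intro _ 1 erefl))
                (exist _ (rcoset H g) (ex_intro _ g erefl)).
have lab : (h \in X) || (h^-1 \in X) by rewrite inE eqxx.
pose e := (exist (fun C : A -> Prop => exists g, C = rcoset H g) (rcoset H 1) (ex_intro _ 1 erefl),
           exist (fun x : A => (x \in X) || (x^-1 \in X)) h lab)
          : gE (schreier_graph H X).
have loop : @gtgt (schreier_graph H X) e = gsrc e.
  rewrite /= /coset_mul; apply: eq_sig_hprop => /=.
    by move=> ? ? ?; apply: proof_irrelevance.
  apply: functional_extensionality => y; rewrite /rcoset invg1 !mulg1.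
  apply: propositional_extensionality; split => Hy.
    by have := HM _ _ Hy Hh; rewrite mulgVK.
  exact: HM _ _ Hy (HV _ Hh).
have s1 := fsrc e; have t1 := ftgt e.
rewrite loop /= fuv in t1; rewrite /= fuv in s1.
move: s1 t1; case: (fE e) => C [x xX] /= -> Ct.
have := f_equal (fun C : coset H => sval C g) Ct.
rewrite /= /rcoset mulgV => E.
have Pxi : P x^-1 by rewrite /P E.
have Px : P x by have := Pinv _ Pxi; rewrite invgK.
have notX : forall z, z \in X -> ~ P z.
  by move=> z; rewrite inE => /orP [/eqP -> | /nZ].
by case/orP: xX => /notX.
Qed.
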